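(* Let $R$ be a P$v$MD, $x$ a nonzero element of $R$, $P$ a prime ideal minimal over $xR$, and $I=xR_P\cap R$. Then (1) $I$ is a $w$-ideal of $R$ (i.e. $I_w=I$); (2) $xR+I^2$ is a $w$-reduction of $I$; (3) if $I$ is $w$-basic, then $P$ is a maximal $t$-ideal of $R$.
   Context: For a domain $R$ with quotient field $K$ and nonzero fractional ideal $I$: $I^{-1}=(R:I)=\{x\in K:xI\subseteq R\}$, $I_v=(I^{-1})^{-1}$, $I_t=\bigcup J_v$ over finitely generated subideals $J\subseteq I$; a maximal $t$-ideal is an ideal maximal among proper integral ideals $Q$ with $Q_t=Q$. The $w$-operation is $I_w=\bigcup(I:J)$ over finitely generated ideals $J$ with $J_v=R$ (equivalently $I_w=\bigcap_M IR_M$ over maximal $t$-ideals $M$). $R$ is a P$v$MD if every nonzero finitely generated ideal $I$ satisfies $(II^{-1})_t=R$ (equivalently $R_M$ is a valuation domain for each maximal $t$-ideal $M$). For a nonzero ideal $I$, an ideal $J\subseteq I$ is a $w$-reduction of $I$ if $(JI^n)_w=(I^{n+1})_w$ for some integer $n\ge0$; $I$ is $w$-basic if every $w$-reduction $J$ of $I$ satisfies $J_w=I_w$. *)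

(* Defs.v *)
(* A domain R with quotient field K is modelled as a field
   K together with a subring S : K -> Prop such that every element of K is a
   quotient of elements of S. *)
From HB Require Import structures.
From mathcomp Require Import all_boot all_order all_algebra.
Set Implicit Arguments. Unset Strict Implicit. Unset Printing Implicit Defensive.
Import GRing.Theory.
Local Open Scope ring_scope.

Section IdealDefs.
Variable K : fieldType.
Implicit Types (S I J A B P Q : K -> Prop) (x y : K).

Definition seteq A B : Prop := forall y, A y <-> B y.
Definition subset A B : Prop := forall y, A y -> B y.

Definition is_domain_with_qf S : Prop :=
  [/\ S 0, S 1, (forall a b, S a -> S b -> S (a - b)),
      (forall a b, S a -> S b -> S (a * b)) &
      (forall k : K, exists a b, [/\ S a, S b, b != 0 & k = a / b])].

Definition is_submod S I : Prop :=
  [/\ I 0, (forall a b, I a -> I b -> I (a + b)) &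
      (forall r a, S r -> I a -> I (r * a))].

Definition is_ideal S I : Prop := is_submod S I /\ subset I S.

Definition is_nz_frac_ideal S I : Prop :=
  [/\ is_submod S I, (exists y, I y /\ y != 0) &
      (exists d, [/\ S d, d != 0 & forall y, I y -> S (d * y)])].

Definition colon A B : K -> Prop := fun x => forall b, B b -> A (x * b).

Definition inv S I := colon S I.
Definition vop S I := colon S (colon S I).

Definition span S (g : seq K) : K -> Prop :=
  fun y => exists f : nat -> K, (forall i, S (f i)) /\
                                y = \sum_(i < size g) f i * g`_i.

Definition all_in (g : seq K) (I : K -> Prop) : Prop :=
  forall i, (i < size g)%N -> I g`_i.

Definition top S I : K -> Prop :=
  fun y => exists g : seq K, all_in g I /\ vop S (span S g) y.

Definition wop S I : K -> Prop :=
  fun y => exists g : seq K, all_in g S /\ seteq (vop S (span S g)) S /\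
                            colon I (span S g) y.

Definition iprod A B : K -> Prop :=
  fun y => exists (n : nat) (a b : nat -> K),
      (forall i, (i < n)%N -> A (a i) /\ B (b i)) /\
      y = \sum_(i < n) a i * b i.

Definition isum A B : K -> Prop := fun y => exists a b, [/\ A a, B b & y = a + b].

Fixpoint ipow S I (n : nat) : K -> Prop :=
  match n with 0%N => S | n'.+1 => iprod (ipow S I n') I end.

Definition principal S x : K -> Prop := fun y => exists r, S r /\ y = x * r.

Definition is_prime S P : Prop :=
  [/\ is_ideal S P, ~ P 1 &
      forall a b, S a -> S b -> P (a * b) -> P a \/ P b].

Definition minimal_prime_over S P x : Prop :=
  [/\ is_prime S P, P x &
      forall Q, is_prime S Q -> Q x -> subset Q P -> seteq Q P].

Definition localize S P : K -> Prop :=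
  fun y => exists a s, [/\ S a, S s, ~ P s & y = a / s].

Definition is_t_ideal S Q : Prop := is_ideal S Q /\ seteq (top S Q) Q.

Definition is_max_t_ideal S Q : Prop :=
  [/\ is_t_ideal S Q, ~ Q 1 &
      forall Q', is_t_ideal S Q' -> ~ Q' 1 -> subset Q Q' -> seteq Q' Q].

Definition PvMD S : Prop :=
  forall g : seq K, all_in g S -> (exists y, span S g y /\ y != 0) ->
    seteq (top S (iprod (span S g) (inv S (span S g)))) S.

Definition w_reduction S J I : Prop :=
  is_ideal S J /\ subset J I /\
  exists n : nat, seteq (wop S (iprod J (ipow S I n))) (wop S (ipow S I n.+1)).

Definition w_basic S I : Prop :=
  forall J, w_reduction S J I -> seteq (wop S J) (wop S I).

End IdealDefs.

(* Main.v *)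
Require Import Defs.
From HB Require Import structures.
From mathcomp Require Import all_boot all_order all_algebra.
From Stdlib Require Import Classical.
From mathcomp Require Import ring.
Set Implicit Arguments. Unset Strict Implicit.
Import GRing.Theory.
Local Open Scope ring_scope.

From mathcomp Require classical_sets boolp.

Lemma zorn_ext (T : Type) (Fam : (T -> Prop) -> Prop) (Q0 : T -> Prop) (t0 : T) :
  Q0 t0 -> Fam Q0 ->
  (forall F : (T -> Prop) -> Prop, (forall X, F X -> Fam X) -> (exists X, F X) ->
     (forall X Y, F X -> F Y -> (forall t, X t -> Y t) \/ (forall t, Y t -> X t)) ->
     Fam (fun t => exists X, F X /\ X t)) ->
  exists M, Fam M /\ (forall t, Q0 t -> M t) /\
     forall B, Fam B -> (forall t, M t -> B t) -> forall t, B t -> M t.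
Proof.
move=> Q0t0 FQ0 Hch.
pose P' := fun A : T -> Prop => (forall t, ~ A t) \/ (Fam A /\ forall t, Q0 t -> A t).
have [A [PA maxA]] : exists A, P' A /\ forall B, classical_sets.proper A B -> ~ P' B.
  apply: classical_sets.Zorn_bigcup => F FP tot.
  case: (classic (exists X, F X /\ exists t, X t)) => [[X [FX [t Xt]]]|none]; last first.
    rewrite /P'; left => t [X FX Xt]; apply: none; by exists X; split => //; exists t.
  rewrite /P'; right.
  have FX' : Fam X /\ forall t, Q0 t -> X t.
    move: (FP X FX); rewrite /P' => -[h|//]; by case: (h t).
  pose F' := fun Y : T -> Prop => F Y /\ exists t, Y t.
  have F'fam : forall Y, F' Y -> Fam Y /\ forall t, Q0 t -> Y t.
    move=> Y [FY [u Yu]]; move: (FP Y FY); rewrite /P' => -[h|//]; by case: (h u).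
  have E : classical_sets.bigcup F id = (fun t => exists Y, F' Y /\ Y t).
    apply: boolp.funext => u; apply: boolp.propext; split.
      by case=> Y FY Yu; exists Y; split => //; split => //; exists u.
    by case=> Y [[FY _] Yu]; exists Y.
  rewrite E; split.
    apply: Hch.
    - by move=> Y /F'fam [].
    - by exists X; split => //; exists t.
    - by move=> Y Z [FY _] [FZ _]; exact: tot.
  by move=> u Qu; exists X; split; [split => //; exists t | exact: FX'.2].
have [FA QA] : Fam A /\ forall t, Q0 t -> A t.
  move: PA; rewrite /P' => -[h|//]; exfalso; apply: (maxA Q0); last by right.
  split; first by move=> u /h.
  by move=> /(_ t0 Q0t0) /h.
exists A; split => //; split => // B FB AB t Bt.
apply: NNPP => nAt; apply: (maxA B).
  split => // BA; exact: nAt (BA t Bt).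
right; split => // u /QA; exact: AB.
Qed.

Section Basics.
Variable K : fieldType.
Variable S : K -> Prop.
Hypothesis HS : is_domain_with_qf S.
Implicit Types (a b r s t y z : K) (g : seq K) (A B C Q M : K -> Prop).

Lemma S0 : S 0. Proof. by case: HS. Qed.
Lemma S1 : S 1. Proof. by case: HS. Qed.
Lemma SB a b : S a -> S b -> S (a - b). Proof. by case: HS => _ _ h _ _; apply: h. Qed.
Lemma SM a b : S a -> S b -> S (a * b). Proof. by case: HS => _ _ _ h _; apply: h. Qed.
Lemma SN a : S a -> S (- a).
Proof. by move=> Sa; rewrite -sub0r; apply: SB => //; exact: S0. Qed.
Lemma SD a b : S a -> S b -> S (a + b).
Proof. by move=> Sa Sb; rewrite -[b]opprK; apply: SB => //; exact: SN. Qed.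
Lemma SX a n : S a -> S (a ^+ n).
Proof. move=> Sa; elim: n => [|n IH]; first by rewrite expr0; exact: S1. by rewrite exprS; apply: SM. Qed.

Lemma sm0 {A} : is_submod S A -> A 0. Proof. by case. Qed.
Lemma smD {A a b} : is_submod S A -> A a -> A b -> A (a + b).
Proof. by case=> _ h _; apply: h. Qed.
Lemma smM {A r a} : is_submod S A -> S r -> A a -> A (r * a).
Proof. by case=> _ _ h; apply: h. Qed.
Lemma smMr {A r a} : is_submod S A -> S r -> A a -> A (a * r).
Proof. by move=> hA Sr Aa; rewrite mulrC; apply: smM. Qed.
Lemma smN {A a} : is_submod S A -> A a -> A (- a).
Proof. by move=> hA Aa; rewrite -mulN1r; apply: smM => //; apply: SN; exact: S1. Qed.
Lemma smB {A a b} : is_submod S A -> A a -> A b -> A (a - b).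
Proof. by move=> hA Aa Ab; apply: smD => //; apply: smN. Qed.
Lemma smS : is_submod S S.
Proof. split; [exact: S0 | exact: SD | exact: SM]. Qed.

Lemma sm_sum A n (f : 'I_n -> K) : is_submod S A -> (forall i, A (f i)) -> A (\sum_i f i).
Proof.
move=> hA hf; elim/big_ind: _ => //; [exact: sm0 | move=> a b; exact: smD].
Qed.

Lemma span_nil y : Defs.span S [::] y <-> y = 0.
Proof.
split; first by case=> f [_ ->]; rewrite big_ord0.
by move=> ->; exists (fun _ => 0); split => [i|]; [exact: S0 | rewrite big_ord0].
Qed.

Lemma span_cons a g y :
  Defs.span S (a :: g) y <-> exists r z, [/\ S r, Defs.span S g z & y = r * a + z].
Proof.
split.
  case=> f [Sf ->]; rewrite /= big_ord_recl /=.
  exists (f 0%N), (\sum_(i < size g) f (bump 0 i) * (a :: g)`_(bump 0 i)); split => //.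
  exists (fun i => f i.+1); split => // ; by apply: eq_bigr => i _.
case=> r [z [Sr [f [Sf ->]] ->]].
exists (fun i => if i is j.+1 then f j else r); split; first by case.
rewrite /= big_ord_recl /=; congr (_ + _); by apply: eq_bigr.
Qed.

Lemma span_submod g : is_submod S (Defs.span S g).
Proof.
elim: g => [|a g IH].
  split; [by apply/span_nil | move=> a b /span_nil -> /span_nil ->; apply/span_nil; by rewrite addr0
         | move=> r a _ /span_nil ->; apply/span_nil; by rewrite mulr0].
split.
- apply/span_cons; exists 0, 0; split; [exact: S0 | exact: sm0 | by rewrite mul0r addr0].
- move=> y1 y2 /span_cons [r1 [z1 [S1' z1g ->]]] /span_cons [r2 [z2 [S2' z2g ->]]].
  apply/span_cons; exists (r1 + r2), (z1 + z2); split; [exact: SD | exact: smD | ].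
  by rewrite mulrDl; rewrite -!addrA; congr (_ + _); rewrite addrCA.
- move=> r y Sr /span_cons [r1 [z1 [S1' z1g ->]]].
  apply/span_cons; exists (r * r1), (r * z1); split; [exact: SM | exact: smM | ].
  by rewrite mulrDr mulrA.
Qed.

Lemma all_in_cons a g A : all_in (a :: g) A <-> A a /\ all_in g A.
Proof.
split.
  move=> h; split; first exact: (h 0%N).
  by move=> i hi; apply: (h i.+1).
by case=> Aa hg [|i] //= hi; apply: hg.
Qed.

Lemma all_in_cat g1 g2 A : all_in g1 A -> all_in g2 A -> all_in (g1 ++ g2) A.
Proof.
elim: g1 => [|a g1 IH] //= h1 h2.
move/all_in_cons: h1 => [Aa h1]; apply/all_in_cons; split => //; exact: IH.
Qed.

Lemma all_in_mono g A B : (forall y, A y -> B y) -> all_in g A -> all_in g B.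
Proof. by move=> AB h i hi; apply: AB; apply: h. Qed.

Lemma span_sub g A : is_submod S A -> all_in g A -> forall y, Defs.span S g y -> A y.
Proof.
move=> hA; elim: g => [|a g IH]; first by move=> _ y /span_nil ->; exact: sm0.
move=> /all_in_cons [Aa hg] y /span_cons [r [z [Sr zg ->]]].
apply: smD => //; [exact: smM | exact: IH].
Qed.

Lemma span_head a g : Defs.span S (a :: g) a.
Proof. apply/span_cons; exists 1, 0; split; [exact: S1 | exact: sm0 (span_submod g) | by rewrite mul1r addr0]. Qed.

Lemma span_tail a g y : Defs.span S g y -> Defs.span S (a :: g) y.
Proof. move=> h; apply/span_cons; exists 0, y; split => //; [exact: S0 | by rewrite mul0r add0r]. Qed.

Lemma span_mem g i : (i < size g)%N -> Defs.span S g g`_i.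
Proof.
elim: g i => [|a g IH] [|i] //= hi; first exact: span_head.
by apply: span_tail; apply: IH.
Qed.

Lemma span_catl g1 g2 y : Defs.span S g1 y -> Defs.span S (g1 ++ g2) y.
Proof.
elim: g1 y => [|a g1 IH] y /=; first by move/span_nil ->; exact: sm0 (span_submod _).
move/span_cons => [r [z [Sr zg ->]]]; apply/span_cons; exists r, z; split => //; exact: IH.
Qed.

Lemma span_catr g1 g2 y : Defs.span S g2 y -> Defs.span S (g1 ++ g2) y.
Proof. elim: g1 => [|a g1 IH] //= h; apply: span_tail; exact: IH. Qed.

Lemma span_S g : all_in g S -> forall y, Defs.span S g y -> S y.
Proof. move=> h; apply: span_sub => //; exact: smS. Qed.


Lemma colon_anti A B C y : (forall a, A a -> B a) -> colon C B y -> colon C A y.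
Proof. by move=> AB h b Ab; apply: h; apply: AB. Qed.

Lemma vop_mono A B y : (forall a, A a -> B a) -> vop S A y -> vop S B y.
Proof. by move=> AB h b hb; apply: h; apply: colon_anti hb. Qed.

Lemma vop_ext A y : A y -> vop S A y.
Proof. by move=> Ay b hb; rewrite mulrC; apply: hb. Qed.

Lemma vop_idem A y : vop S (vop S A) y -> vop S A y.
Proof. move=> h b hb; apply: h => c hc; rewrite mulrC; exact: hc. Qed.

Lemma vop_submod A : is_submod S (vop S A).
Proof.
split.
- by move=> b _; rewrite mul0r; exact: S0.
- by move=> y z hy hz b hb; rewrite mulrDl; apply: SD; [apply: hy | apply: hz].
- by move=> r y Sr hy b hb; rewrite -mulrA; apply: SM => //; apply: hy.
Qed.

Lemma vop_mul A B C y z : (forall a b, A a -> B b -> C (a * b)) ->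
  vop S A y -> vop S B z -> vop S C (y * z).
Proof.
move=> hC hy hz w hw.
have h1 : colon S B (y * w).
  move=> b Bb; rewrite -mulrA; apply: hy => a Aa.
  by rewrite -mulrA [b * a]mulrC; apply: hw; apply: hC.
by rewrite [y * z]mulrC -mulrA; apply: hz.
Qed.

Lemma vop_scale A B be y : (forall a, A a -> B (be * a)) -> vop S A y -> vop S B (be * y).
Proof.
move=> hB hy w hw; rewrite [be * y]mulrC -mulrA; apply: hy => a Aa.
by rewrite [be * w]mulrC -mulrA; apply: hw; apply: hB.
Qed.

Lemma vop_princ x y : x != 0 -> vop S (principal S x) y -> principal S x y.
Proof.
move=> x0 hy; exists (y * x^-1); split.
  apply: hy => b [r [Sr ->]]; by rewrite mulrA mulVf // mul1r.
by rewrite mulrC -mulrA mulVf // mulr1.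
Qed.

Lemma vop_subS A y : (forall a, A a -> S a) -> vop S A y -> S y.
Proof. move=> AS hy; rewrite -[y]mulr1; apply: hy => b Ab; rewrite mul1r; exact: AS. Qed.

Lemma vop_SS y : vop S S y <-> S y.
Proof. split; [exact: vop_subS | exact: vop_ext]. Qed.


Lemma top_ext A y : A y -> top S A y.
Proof.
move=> Ay; exists [:: y]; split; first by apply/all_in_cons; split.
apply: vop_ext; exact: span_head.
Qed.

Lemma top_mono A B y : (forall a, A a -> B a) -> top S A y -> top S B y.
Proof. by move=> AB [g [hg hy]]; exists g; split => //; apply: all_in_mono hg. Qed.

Lemma top_subS A y : (forall a, A a -> S a) -> top S A y -> S y.
Proof.
move=> AS [g [hg hy]]; apply: vop_subS hy; apply: span_S.
exact: all_in_mono hg.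
Qed.

Lemma top_submod A : is_submod S (top S A).
Proof.
split.
- exists [::]; split => //; exact: sm0 (vop_submod _).
- move=> y z [g1 [h1 hy]] [g2 [h2 hz]]; exists (g1 ++ g2); split; first exact: all_in_cat.
  apply: (smD (vop_submod _)).
  + by apply: vop_mono hy => a; apply: span_catl.
  + by apply: vop_mono hz => a; apply: span_catr.
- move=> r y Sr [g [hg hy]]; exists g; split => //; exact: (smM (vop_submod _)).
Qed.

Lemma top_gen A g : all_in g (top S A) ->
  exists H, all_in H A /\ forall y, Defs.span S g y -> vop S (Defs.span S H) y.
Proof.
elim: g => [|a g IH].
  by move=> _; exists [::]; split => // y /span_nil ->; exact: sm0 (vop_submod _).
move=> /all_in_cons [[h [hh ha]] /IH [H [hH hs]]].
exists (h ++ H); split; first exact: all_in_cat.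
move=> y /span_cons [r [z [Sr zg ->]]]; apply: (smD (vop_submod _)).
  apply: (smM (vop_submod _)) => //.
  by apply: vop_mono ha => b; apply: span_catl.
by apply: vop_mono (hs _ zg) => b; apply: span_catr.
Qed.

Lemma top_idem A y : top S (top S A) y -> top S A y.
Proof.
move=> [g [hg hy]]; have [H [hH hs]] := @top_gen A g hg.
exists H; split => //; apply: vop_idem; exact: vop_mono hy.
Qed.

Lemma top_ideal A : is_ideal S A -> is_ideal S (top S A).
Proof. by move=> [hA AS]; split; [exact: top_submod | move=> y; apply: top_subS]. Qed.

Lemma top_t A : is_ideal S A -> is_t_ideal S (top S A).
Proof. move=> hA; split; first exact: top_ideal. by move=> y; split; [apply: top_idem | apply: top_ext]. Qed.

Lemma t_vop Q g y : is_t_ideal S Q -> all_in g Q -> vop S (Defs.span S g) y -> Q y.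
Proof. by move=> [_ hQ] hg hy; apply/hQ; exists g. Qed.

Lemma t_top Q y : is_t_ideal S Q -> top S Q y -> Q y.
Proof. by move=> [_ hQ] /hQ. Qed.


Lemma iprod_1 A B a b : A a -> B b -> iprod A B (a * b).
Proof.
move=> Aa Bb; exists 1%N, (fun _ => a), (fun _ => b); split; last by rewrite big_ord1.
by move=> i _.
Qed.

Lemma iprod_sub A B C y : is_submod S C -> (forall a b, A a -> B b -> C (a * b)) ->
  iprod A B y -> C y.
Proof.
move=> hC hAB [n [a [b [hab ->]]]]; apply: sm_sum => // i.
by have [Aa Bb] := hab i (ltn_ord i); apply: hAB.
Qed.

Lemma iprod_submod A B : is_submod S B -> is_submod S (iprod A B).
Proof.
move=> hB; split.
- by exists 0%N, (fun _ => 0), (fun _ => 0); split => //; rewrite big_ord0.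
- move=> y z [n1 [a1 [b1 [h1 ->]]]] [n2 [a2 [b2 [h2 ->]]]].
  exists (n1 + n2)%N, (fun i => if (i < n1)%N then a1 i else a2 (i - n1)%N),
         (fun i => if (i < n1)%N then b1 i else b2 (i - n1)%N); split.
    move=> i hi; case: ifP => hin; first exact: h1.
    apply: h2; rewrite ltn_subLR //; by rewrite leqNgt hin.
  rewrite big_split_ord /=; congr (_ + _); apply: eq_bigr => i _ /=.
    by rewrite ltn_ord.
  by rewrite ltnNge leq_addr /= addKn.
- move=> r y Sr [n [a [b [h ->]]]]; exists n, a, (fun i => r * b i); split.
    by move=> i hi; have [Aa Bb] := h i hi; split => //; apply: smM.
  by rewrite mulr_sumr; apply: eq_bigr => i _; rewrite mulrCA.
Qed.

Lemma isum_submod A B : is_submod S A -> is_submod S B -> is_submod S (isum A B).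
Proof.
move=> hA hB; split.
- by exists 0, 0; split; [exact: sm0 | exact: sm0 | rewrite addr0].
- move=> y z [a1 [b1 [A1 B1 ->]]] [a2 [b2 [A2 B2 ->]]]; exists (a1 + a2), (b1 + b2); split.
  + exact: smD. + exact: smD. + by rewrite addrACA.
- move=> r y Sr [a [b [Aa Bb ->]]]; exists (r * a), (r * b); split.
  + exact: smM. + exact: smM. + by rewrite mulrDr.
Qed.

Lemma princ_submod x : S x -> is_submod S (principal S x).
Proof.
move=> Sx; split.
- by exists 0; split; [exact: S0 | rewrite mulr0].
- move=> y z [r [Sr ->]] [t [St ->]]; exists (r + t); split; [exact: SD | by rewrite mulrDr].
- move=> r' y Sr' [r [Sr ->]]; exists (r' * r); split; [exact: SM | by rewrite mulrCA].
Qed.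

Definition nmul Q := forall a b, S a -> S b -> ~ Q a -> ~ Q b -> ~ Q (a * b).

Lemma loc_S Q a : ~ Q 1 -> S a -> localize S Q a.
Proof. by move=> Q1 Sa; exists a, 1; split => //; [exact: S1 | rewrite invr1 mulr1]. Qed.

Lemma nQ_neq0 Q s : Q 0 -> ~ Q s -> s != 0.
Proof. by move=> Q0 Qs; apply/eqP => s0; apply: Qs; rewrite s0. Qed.

Lemma loc_submod Q : Q 0 -> ~ Q 1 -> nmul Q -> is_submod S (localize S Q).
Proof.
move=> Q0 Q1 hQ; split.
- by exists 0, 1; split; [exact: S0 | exact: S1 | | rewrite mul0r].
- move=> y z [a [s [Sa Ss Qs ->]]] [b [t [Sb St Qt ->]]].
  exists (a * t + b * s), (s * t); split.
  + by apply: SD; apply: SM.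
  + exact: SM.
  + exact: hQ.
  + have s0 := @nQ_neq0 Q s Q0 Qs; have t0 := @nQ_neq0 Q t Q0 Qt; field.
    by rewrite s0 t0.
- move=> r y Sr [a [s [Sa Ss Qs ->]]]; exists (r * a), s; split => //.
  + exact: SM.
  + by rewrite mulrA.
Qed.

Lemma loc_mul Q y z : Q 0 -> nmul Q -> localize S Q y -> localize S Q z -> localize S Q (y * z).
Proof.
move=> Q0 hQ [a [s [Sa Ss Qs ->]]] [b [t [Sb St Qt ->]]].
exists (a * b), (s * t); split; [exact: SM | exact: SM | exact: hQ |].
have s0 := @nQ_neq0 Q s Q0 Qs; have t0 := @nQ_neq0 Q t Q0 Qt; field.
by rewrite s0 t0.
Qed.


Lemma chain_all_in (F : (K -> Prop) -> Prop) g :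
  (exists X, F X) ->
  (forall X Y, F X -> F Y -> (forall t, X t -> Y t) \/ (forall t, Y t -> X t)) ->
  all_in g (fun t => exists X, F X /\ X t) -> exists X, F X /\ all_in g X.
Proof.
move=> [X0 FX0] tot; elim: g => [|a g IH]; first by move=> _; exists X0.
move=> /all_in_cons [[X [FX Xa]] /IH [Y [FY hY]]].
case: (tot X Y FX FY) => XY.
  by exists Y; split => //; apply/all_in_cons; split => //; apply: XY.
by exists X; split => //; apply/all_in_cons; split => //; apply: all_in_mono hY.
Qed.

Lemma exists_maxt Q : is_t_ideal S Q -> ~ Q 1 ->
  exists M, is_max_t_ideal S M /\ forall y, Q y -> M y.
Proof.
move=> tQ Q1.
have Q0 : Q 0 by case: tQ => [[[h _ _] _] _].
have Hch : forall F : (K -> Prop) -> Prop,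
    (forall X, F X -> is_t_ideal S X /\ ~ X 1) -> (exists X, F X) ->
    (forall X Y, F X -> F Y -> (forall t, X t -> Y t) \/ (forall t, Y t -> X t)) ->
    is_t_ideal S (fun t => exists X, F X /\ X t) /\ ~ (exists X, F X /\ X 1).
  move=> F FF Fne tot.
  move: (Fne) => [X0 FX0].
  have hU : is_ideal S (fun t => exists X, F X /\ X t).
    split; first split.
    - by exists X0; split => //; case: (FF X0 FX0) => [[[[h _ _] _] _] _].
    - move=> y z [X [FX Xy]] [Y [FY Yz]].
      have smX := (FF X FX).1.1.1; have smY := (FF Y FY).1.1.1.
      case: (tot X Y FX FY) => XY.
        by exists Y; split => //; apply: smD => //; apply: XY.
      by exists X; split => //; apply: smD => //; apply: XY.
    - move=> r y Sr [X [FX Xy]]; exists X; split => //; apply: smM => //.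
      exact: (FF X FX).1.1.1.
    - by move=> y [X [FX Xy]]; apply: (FF X FX).1.1.2.
  split; last by move=> [X [FX X1]]; apply: (FF X FX).2.
  split => // y; split; last exact: top_ext.
  move=> [g [hg hy]]; have [X [FX hX]] := @chain_all_in F g Fne tot hg.
  exists X; split => //; apply: (t_vop (FF X FX).1 hX hy).
have [M [[tM M1] [QM maxM]]] := @zorn_ext K (fun A => is_t_ideal S A /\ ~ A 1) Q 0 Q0 (conj tQ Q1) Hch.
exists M; split => //; split => // Q' tQ' Q'1 MQ' y; split; last exact: MQ'.
by apply: (maxM Q').
Qed.

Lemma maxt_plus M a : is_max_t_ideal S M -> S a -> ~ M a ->
  top S (fun z => exists m r, [/\ M m, S r & z = m + r * a]) 1.
Proof.
move=> [tM M1 maxM] Sa Ma.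
set A := (fun z => _); apply: NNPP => nA.
have hA : is_ideal S A.
  have hsM := tM.1.1.
  split; first split.
  - exists 0, 0; split; [exact: sm0 | exact: S0 | by rewrite mul0r addr0].
  - move=> y z [m [r [Mm Sr ->]]] [m' [r' [Mm' Sr' ->]]]; exists (m + m'), (r + r'); split.
    + exact: smD. + exact: SD. + by rewrite mulrDl addrACA.
  - move=> r' y Sr' [m [r [Mm Sr ->]]]; exists (r' * m), (r' * r); split.
    + exact: smM. + exact: SM. + by rewrite mulrDr mulrA.
  - move=> y [m [r [Mm Sr ->]]]; apply: SD; [exact: tM.1.2 | exact: SM].
have := maxM _ (top_t hA) nA.
have MA : forall y, M y -> top S A y.
  move=> y My; apply: top_ext; exists y, 0; split => //; [exact: S0 | by rewrite mul0r addr0].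
move=> /(_ MA) /(_ a) [h _]; apply: Ma; apply: h; apply: top_ext.
exists 0, 1; split; [exact: sm0 tM.1.1 | exact: S1 | by rewrite mul1r add0r].
Qed.

Lemma all_in_map (f : K -> K) g A B : (forall y, A y -> B (f y)) -> all_in g A -> all_in (map f g) B.
Proof.
move=> hf; elim: g => [|a g IH] //= /all_in_cons [Aa hg].
by apply/all_in_cons; split; [apply: hf | apply: IH].
Qed.

Lemma span_map_mul be g y : Defs.span S g y -> Defs.span S (map (fun a => be * a) g) (be * y).
Proof.
elim: g y => [|a g IH] y /=; first by move/span_nil ->; apply/span_nil; rewrite mulr0.
move/span_cons => [r [z [Sr zg ->]]]; apply/span_cons; exists r, (be * z); split => //.
  exact: IH.
by rewrite mulrDr mulrCA.
Qed.

Lemma tideal_sub M y : is_t_ideal S M -> M y -> S y.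
Proof. by case=> [[_ h] _]; apply: h. Qed.

Lemma maxt_prime M a b : is_max_t_ideal S M -> S a -> S b -> M (a * b) -> M a \/ M b.
Proof.
move=> hM Sa Sb Mab; apply: NNPP => h.
have Ma : ~ M a by move=> Ma; apply: h; left.
have Mb : ~ M b by move=> Mb; apply: h; right.
have [tM M1 _] := hM; have smM' := tM.1.1.
have [g1 [h1 v1]] := maxt_plus hM Sa Ma.
have [g2 [h2 v2]] := maxt_plus hM Sb Mb.
have hg2 : all_in g2 (top S M).
  apply: all_in_mono h2 => be hbe.
  exists (map (fun al => be * al) g1); split.
    apply: all_in_map h1 => al [m [r [Mm Sr ->]]].
    case: hbe => m' [r' [Mm' Sr' ->]].
    have Sm := tideal_sub tM Mm; have Sm' := tideal_sub tM Mm'.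
    have -> : (m' + r' * b) * (m + r * a) = m' * (m + r * a) + r' * (b * m) + (r' * r) * (a * b)
      by ring.
    apply: smD => //; first apply: smD => //.
    + by apply: smMr => //; apply: SD => //; apply: SM.
    + by apply: smM => //; apply: smM.
    + by apply: smM => //; apply: SM.
  have := @vop_scale _ (Defs.span S (map (fun al => be * al) g1)) be 1 (fun y => @span_map_mul be g1 y) v1; by rewrite mulr1.
have [H [hH hs]] := @top_gen M g2 hg2.
apply: M1; apply: (t_top tM); exists H; split => //.
by apply: vop_idem; apply: vop_mono v2.
Qed.

Lemma maxt_nmul M : is_max_t_ideal S M -> nmul M.
Proof.
move=> hM a b Sa Sb Ma Mb /(maxt_prime hM Sa Sb) [] //.
Qed.

Lemma maxt_0 M : is_max_t_ideal S M -> M 0.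
Proof. by case=> [[[[h _ _] _] _] _ _]. Qed.

Lemma maxt_notall M g : is_max_t_ideal S M -> vop S (Defs.span S g) 1 ->
  exists i, (i < size g)%N /\ ~ M g`_i.
Proof.
move=> [tM M1 _] hv; apply: NNPP => h; apply: M1; apply: (t_vop tM _ hv).
move=> i hi; apply: NNPP => Mi; apply: h; by exists i.
Qed.

Lemma maxt_val M z : PvMD S -> is_max_t_ideal S M -> localize S M z \/ localize S M z^-1.
Proof.
move=> hP hM; have M0 := maxt_0 hM; have [tM M1 _] := hM.
have hsM := tM.1.1.
case: (HS) => _ _ _ _ /(_ z) [a [b [Sa Sb b0 ->]]].
case: (eqVneq a 0) => [->|a0].
  by left; rewrite mul0r; apply: loc_S M1 S0.
have hg : all_in [:: a; b] S.
  by apply/all_in_cons; split => //; apply/all_in_cons; split.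
have hne : exists y, Defs.span S [:: a; b] y /\ y != 0.
  by exists a; split => //; apply: span_head.
have := hP _ hg hne 1 => /proj2 /(_ S1) [h [hh hv]].
have [i [hi Mi]] := maxt_notall hM hv.
have [n [al [be [hab he]]]] := hh i hi.
have [j Mj] : exists j : 'I_n, ~ M (al j * be j).
  apply: NNPP => nj; apply: Mi; rewrite he; apply: sm_sum hsM _ => j.
  by apply: NNPP => Mj; apply: nj; exists j.
have [spa inb] := hab j (ltn_ord j).
have Sa' : S (be j * a) by apply: inb; apply: span_head.
have Sb' : S (be j * b) by apply: inb; apply: span_tail; apply: span_head.
move: spa Mj => /span_cons [r [z' [Sr /span_cons [r' [z'' [Sr' /span_nil -> ->]]] ->]]].
rewrite addr0 => Mj.
case: (classic (M (be j * a))) => Ma.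
  case: (classic (M (be j * b))) => Mb.
    exfalso; apply: Mj.
    have -> : (r * a + r' * b) * be j = r * (be j * a) + r' * (be j * b) by ring.
    by apply: smD => //; apply: smM.
  have bj0 : be j != 0 by apply/eqP => e; apply: Mb; rewrite e mul0r.
  left; exists (be j * a), (be j * b); split => //.
  by field; rewrite bj0 b0.
have bj0 : be j != 0 by apply/eqP => e; apply: Ma; rewrite e mul0r.
right; exists (be j * b), (be j * a); split => //.
by field; rewrite bj0 b0 a0.
Qed.

Lemma span1 y : S y -> Defs.span S [:: 1] y.
Proof.
move=> Sy; apply/span_cons; exists y, 0; split => //; first exact: sm0 (span_submod _).
by rewrite mulr1 addr0.
Qed.

Lemma vop_span1 y : vop S (Defs.span S [:: 1]) y <-> S y.
Proof.
split.
  by apply: vop_subS; apply: span_S; apply/all_in_cons; split => //; exact: S1.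
move=> Sy; rewrite -[y]mulr1; apply: (smM (vop_submod _)) => //.
by apply: vop_ext; apply: span_head.
Qed.

Lemma wop_ext A y : is_submod S A -> A y -> wop S A y.
Proof.
move=> hA Ay; exists [:: 1]; split; first by apply/all_in_cons; split => //; exact: S1.
split; first exact: vop_span1.
move=> b /span_cons [r [z [Sr /span_nil -> ->]]]; rewrite mulr1 addr0.
exact: smMr.
Qed.

Lemma wop_mono A B y : (forall a, A a -> B a) -> wop S A y -> wop S B y.
Proof. by move=> AB [g [hg [hv hc]]]; exists g; split => //; split => // b /hc /AB. Qed.

Lemma wop_local A y : is_submod S A ->
  (forall M, is_max_t_ideal S M -> exists w, [/\ S w, ~ M w & A (w * y)]) -> wop S A y.
Proof.
move=> hA hloc.
pose C := fun w => S w /\ A (w * y).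
have hC : is_ideal S C.
  split; last by move=> w [].
  split.
  - by split; [exact: S0 | rewrite mul0r; exact: sm0].
  - move=> w1 w2 [S1' A1] [S2' A2]; split; first exact: SD.
    by rewrite mulrDl; apply: smD.
  - move=> r w Sr [Sw Aw]; split; first exact: SM.
    by rewrite -mulrA; apply: smM.
case: (classic (top S C 1)) => [[g [hg hv]]|nC].
  exists g; split; first by apply: all_in_mono hg => w [].
  split.
    move=> y'; split; first by apply: vop_subS; apply: span_S; apply: all_in_mono hg => w [].
    by move=> Sy'; rewrite -[y']mulr1; apply: (smM (vop_submod _)).
  move=> b hb; have [_ Ab] := span_sub hC.1 hg hb; by rewrite mulrC.
have [M [hM CM]] := exists_maxt (top_t hC) nC.
have [w [Sw Mw Aw]] := hloc M hM.
by exfalso; apply: Mw; apply: CM; apply: top_ext.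
Qed.

Lemma wop_sub_local A B y : is_submod S A ->
  (forall M, is_max_t_ideal S M -> forall b, B b -> exists w, [/\ S w, ~ M w & A (w * b)]) ->
  wop S B y -> wop S A y.
Proof.
move=> hA hloc [g [hg [hv hc]]]; apply: wop_local => // M hM.
have [i [hi Mi]] := maxt_notall hM ((hv 1).2 S1).
have Bb := hc _ (span_mem hi).
have [w [Sw Mw Aw]] := hloc M hM _ Bb.
exists (w * g`_i); split.
- by apply: SM => //; apply: hg.
- by apply: (maxt_nmul hM) => //; apply: hg.
- by rewrite mulrAC -mulrA.
Qed.

Definition plusR Q b := fun z => exists m r, [/\ Q m, S r & z = m + r * b].

Lemma plusR_ideal Q b : is_ideal S Q -> S b -> is_ideal S (plusR Q b).
Proof.
move=> [hsQ QS] Sb; split; first split.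
- exists 0, 0; split; [exact: sm0 | exact: S0 | by rewrite mul0r addr0].
- move=> y z [m [r [Mm Sr ->]]] [m' [r' [Mm' Sr' ->]]]; exists (m + m'), (r + r'); split.
  + exact: smD. + exact: SD. + by rewrite mulrDl addrACA.
- move=> r' y Sr' [m [r [Mm Sr ->]]]; exists (r' * m), (r' * r); split.
  + exact: smM. + exact: SM. + by rewrite mulrDr mulrA.
- move=> y [m [r [Mm Sr ->]]]; apply: SD; [exact: QS | exact: SM].
Qed.

Lemma plusR_l Q b y : is_ideal S Q -> Q y -> plusR Q b y.
Proof. by move=> hQ Qy; exists y, 0; split => //; [exact: S0 | rewrite mul0r addr0]. Qed.

Lemma plusR_b Q b : is_ideal S Q -> plusR Q b b.
Proof. by move=> hQ; exists 0, 1; split; [exact: sm0 hQ.1 | exact: S1 | rewrite mul1r add0r]. Qed.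

Variable hPv : PvMD S.
Variables (x : K) (hxS : S x) (hx0 : x != 0) (P : K -> Prop).
Hypothesis HP : minimal_prime_over S P x.

Lemma P_ideal : is_ideal S P. Proof. by case: HP => [[]]. Qed.
Lemma P_1 : ~ P 1. Proof. by case: HP => [[]]. Qed.
Lemma P_x : P x. Proof. by case: HP. Qed.
Lemma P_0 : P 0. Proof. exact: sm0 P_ideal.1. Qed.
Lemma P_S y : P y -> S y. Proof. exact: P_ideal.2. Qed.
Lemma P_prime a b : S a -> S b -> P (a * b) -> P a \/ P b.
Proof. by case: HP => [[_ _ h] _ _]; apply: h. Qed.
Lemma P_nmul : nmul P.
Proof. by move=> a b Sa Sb Pa Pb /(P_prime Sa Sb) []. Qed.
Lemma P_nX s n : S s -> ~ P s -> ~ P (s ^+ n).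
Proof.
move=> Ss Ps; elim: n => [|n IH]; first by rewrite expr0; exact: P_1.
by rewrite exprS; apply: P_nmul => //; apply: SX.
Qed.
Lemma P_X y n : S y -> P (y ^+ n) -> P y.
Proof. by move=> Sy Pyn; apply: NNPP => Py; exact: (@P_nX y n Sy Py Pyn). Qed.
Lemma princ_P y : principal S x y -> P y.
Proof. by move=> [r [Sr ->]]; apply: smMr P_ideal.1 Sr P_x. Qed.

Lemma radical a : P a -> exists s n, [/\ S s, ~ P s & principal S x (s * a ^+ n)].
Proof.
move=> Pa; apply: NNPP => hn.
have Sa := P_S Pa.
have hsx := princ_submod hxS.
have pS : forall y, principal S x y -> S y by move=> y [r [Sr ->]]; apply: SM.
pose Fam := fun A => is_ideal S A /\ forall s n, S s -> ~ P s -> ~ A (s * a ^+ n).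
have Fx : Fam (principal S x).
  by split; [split | move=> s n Ss Ps hA; apply: hn; exists s, n].
have Hch : forall F : (K -> Prop) -> Prop,
    (forall X, F X -> Fam X) -> (exists X, F X) ->
    (forall X Y, F X -> F Y -> (forall t, X t -> Y t) \/ (forall t, Y t -> X t)) ->
    Fam (fun t => exists X, F X /\ X t).
  move=> F FF [X0 FX0] tot.
  split; last by move=> s n Ss Ps [X [FX Xs]]; apply: (FF X FX).2 Ss Ps Xs.
  split; first split.
  - by exists X0; split => //; exact: sm0 (FF X0 FX0).1.1.
  - move=> y z [X [FX Xy]] [Y [FY Yz]].
    have smX := (FF X FX).1.1; have smY := (FF Y FY).1.1.
    case: (tot X Y FX FY) => XY.
      by exists Y; split => //; apply: smD => //; apply: XY.
    by exists X; split => //; apply: smD => //; apply: XY.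
  - move=> r y Sr [X [FX Xy]]; exists X; split => //; apply: smM => //.
    exact: (FF X FX).1.1.
  - by move=> y [X [FX Xy]]; apply: (FF X FX).1.2.
have [Q [[hQ avQ] [xQ maxQ]]] := @zorn_ext K Fam (principal S x) 0 (sm0 hsx) Fx Hch.
have nfam : forall b, S b -> ~ Q b -> exists s n, [/\ S s, ~ P s & plusR Q b (s * a ^+ n)].
  move=> b Sb Qb; apply: NNPP => h; apply: Qb.
  apply: (maxQ (plusR Q b)); last exact: plusR_b.
    split; first exact: plusR_ideal.
    by move=> s n Ss Ps hs; apply: h; exists s, n.
  by move=> y; apply: plusR_l.
have QP : forall y, Q y -> P y.
  move=> y Qy; apply: NNPP => Py; apply: (avQ y 0%N (hQ.2 _ Qy) Py).
  by rewrite expr0 mulr1.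
have Qprime : is_prime S Q.
  split => //.
    by move=> Q1; apply: (avQ 1 0%N S1 P_1); rewrite expr0 mulr1.
  move=> b c Sb Sc Qbc; apply: NNPP => h.
  have Qb : ~ Q b by move=> ?; apply: h; left.
  have Qc : ~ Q c by move=> ?; apply: h; right.
  have [s1 [n1 [Ss1 Ps1 [m1 [r1 [Qm1 Sr1 e1]]]]]] := nfam b Sb Qb.
  have [s2 [n2 [Ss2 Ps2 [m2 [r2 [Qm2 Sr2 e2]]]]]] := nfam c Sc Qc.
  apply: (avQ (s1 * s2) (n1 + n2)%N (SM Ss1 Ss2) (P_nmul Ss1 Ss2 Ps1 Ps2)).
  have -> : s1 * s2 * a ^+ (n1 + n2) = (s1 * a ^+ n1) * (s2 * a ^+ n2).
    by rewrite exprD; ring.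
  rewrite e1 e2.
  have -> : (m1 + r1 * b) * (m2 + r2 * c) = m1 * (m2 + r2 * c) + r1 * (b * m2) + (r1 * r2) * (b * c)
    by ring.
  have Sm2 := hQ.2 _ Qm2.
  apply: smD hQ.1 _ _; first apply: smD hQ.1 _ _.
  + by apply: smMr hQ.1 _ Qm1; apply: SD => //; apply: SM.
  + by apply: smM hQ.1 Sr1 _; apply: smM hQ.1 Sb Qm2.
  + by apply: smM hQ.1 (SM Sr1 Sr2) Qbc.
have [_ _ hmin] := HP.
have := hmin Q Qprime (xQ _ (ex_intro _ 1 (conj S1 (esym (mulr1 x))))) QP a.
move=> [_ /(_ Pa) Qa]; apply: (avQ 1 1%N S1 P_1); by rewrite mul1r expr1.
Qed.

Lemma radt g : all_in g P -> forall y, vop S (isum (Defs.span S g) (principal S x)) y ->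
  exists s N, [/\ S s, ~ P s & principal S x (s * y ^+ N)].
Proof.
have hsx := princ_submod hxS.
have pS : forall y, principal S x y -> S y by move=> y [r [Sr ->]]; apply: SM.
elim: g => [|a g IH] hg y hy.
  exists 1, 1%N; split; [exact: S1 | exact: P_1 | rewrite mul1r expr1].
  apply: vop_princ hx0 _; apply: vop_mono hy => z [a' [b [/span_nil -> Bb ->]]].
  by rewrite add0r.
move/all_in_cons: hg => [Pa hg].
have Sa := P_S Pa.
pose B1 := isum (Defs.span S g) (principal S x).
have hB1 : is_submod S B1 by apply: isum_submod; [exact: span_submod | exact: hsx].
have B1S : forall z, B1 z -> S z.
  move=> z [c [d [cg dx ->]]]; apply: SD; last exact: pS.
  exact: (span_S (all_in_mono P_S hg) cg).
pose C n := fun z => exists r b, [/\ S r, B1 b & z = a ^+ n * r + b].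
have hC : forall n, vop S (C n.+1) (y ^+ n.+1).
  elim=> [|n IHn].
    rewrite expr1; apply: vop_mono hy => z [a' [b [/span_cons [r [z' [Sr z'g ->]]] Bb ->]]].
    exists r, (z' + b); split => //; first by exists z', b.
    by rewrite expr1 mulrC addrA.
  rewrite exprS mulrC; apply: (vop_mul _ IHn hy) => u v [r [b [Sr Bb ->]]] [a' [b' [/span_cons [r' [z' [Sr' z'g ->]]] Bb' ->]]].
  have Sz' : S z' := span_S (all_in_mono P_S hg) z'g.
  have Sb' : S b' by apply: pS.
  exists (r * r'), (a ^+ n.+1 * r * (z' + b') + b * (r' * a + (z' + b'))); split.
  - exact: SM.
  - apply: (smD hB1).
      apply: (smM hB1); first by apply: SM => //; apply: SX.
      by exists z', b'.
    apply: (smMr hB1 _ Bb); apply: SD; [exact: SM | exact: SD].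
  - by rewrite !exprS; ring.
have [sg [n0 [Ssg Psg hsg]]] := radical Pa.
have hsg1 : principal S x (sg * a ^+ n0.+1) by rewrite exprS mulrCA; apply: smM hsx Sa hsg.
have hv : vop S B1 (sg * y ^+ n0.+1).
  apply: vop_scale (hC n0) => z [r [b [Sr Bb ->]]].
  have -> : sg * (a ^+ n0.+1 * r + b) = (sg * a ^+ n0.+1) * r + sg * b by ring.
  apply: (smD hB1); last exact: smM hB1 Ssg Bb.
  exists 0, (sg * a ^+ n0.+1 * r); split; [exact: sm0 (span_submod _) | exact: smMr hsx Sr hsg1 | by rewrite add0r].
have [s' [N' [Ss' Ps' hs']]] := IH hg _ hv.
exists (s' * sg ^+ N'), (n0.+1 * N')%N; split.
- by apply: SM => //; apply: SX.
- by apply: P_nmul => //; [apply: SX | apply: P_nX].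
- by move: hs'; rewrite exprMn exprM mulrA.
Qed.

Lemma P_t : is_t_ideal S P.
Proof.
split; first exact: P_ideal.
move=> y; split; last exact: top_ext.
move=> [g [hg hv]].
have Sy : S y by apply: vop_subS hv; apply: span_S; apply: all_in_mono hg; exact: P_S.
have hv' : vop S (isum (Defs.span S g) (principal S x)) y.
  apply: vop_mono hv => z hz; exists z, 0; split => //; [exact: sm0 (princ_submod hxS) | by rewrite addr0].
have [s [N [Ss Ps hs]]] := radt hg hv'.
have := princ_P hs; case/P_prime => //; first exact: SX.
exact: P_X.
Qed.

Definition Iset := fun y => S y /\ exists r, localize S P r /\ y = x * r.

Lemma locP_submod : is_submod S (localize S P).
Proof. exact: loc_submod P_0 P_1 P_nmul. Qed.

Lemma locP_mul y z : localize S P y -> localize S P z -> localize S P (y * z).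
Proof. exact: loc_mul P_0 P_nmul. Qed.

Lemma locP_S a : S a -> localize S P a.
Proof. exact: loc_S P_1. Qed.

Lemma I_submod : is_submod S Iset.
Proof.
split.
- by split; [exact: S0 | exists 0; split; [exact: sm0 locP_submod | rewrite mulr0]].
- move=> y z [Sy [r [lr ey]]] [Sz [t [lt ez]]]; split; first exact: SD.
  by exists (r + t); split; [exact: smD locP_submod lr lt | rewrite ey ez mulrDr].
- move=> r y Sr [Sy [t [lt ey]]]; split; first exact: SM.
  by exists (r * t); split; [apply: locP_mul => //; exact: locP_S | rewrite ey mulrCA].
Qed.

Lemma I_S y : Iset y -> S y. Proof. by case. Qed.

Lemma I_ideal : is_ideal S Iset.
Proof. split; [exact: I_submod | exact: I_S]. Qed.

Lemma I_x : Iset x.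
Proof. by split => //; exists 1; split; [exact: locP_S S1 | rewrite mulr1]. Qed.

Lemma I_intro y a s : S y -> S a -> S s -> ~ P s -> s * y = x * a -> Iset y.
Proof.
move=> Sy Sa Ss Ps e; split => //; exists (a / s); split.
  by exists a, s; split.
have s0 : s != 0 by apply/eqP => s0; apply: Ps; rewrite s0; exact: P_0.
by apply: (mulfI s0); rewrite e; field.
Qed.

Lemma I_elim y : Iset y -> exists a s, [/\ S a, S s, ~ P s & s * y = x * a].
Proof.
move=> [Sy [r [[a [s [Sa Ss Ps ->]]] ->]]]; exists a, s; split => //.
have s0 : s != 0 by apply/eqP => s0; apply: Ps; rewrite s0; exact: P_0.
by field.
Qed.

Lemma I_P y : Iset y -> P y.
Proof.
move=> hy; have [a [s [Sa Ss Ps e]]] := I_elim hy.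
have : P (s * y) by rewrite e; apply: smMr P_ideal.1 Sa P_x.
by case/(P_prime Ss (I_S hy)).
Qed.

Lemma part1 : seteq (wop S Iset) Iset.
Proof.
move=> y; split; last exact: wop_ext I_submod.
move=> [g [hg [hv hc]]].
have h1 := (hv 1).2 S1.
have Sy : S y.
  rewrite -[y]mul1r; apply: h1 => b hb; have := hc _ hb; rewrite mulrC; exact: I_S.
have [i [hi Pi]] : exists i, (i < size g)%N /\ ~ P g`_i.
  apply: NNPP => h; apply: P_1; apply: (t_vop P_t _ h1) => i hi.
  by apply: NNPP => Pi; apply: h; exists i.
have Sgi : S g`_i by apply: hg.
have [a [s [Sa Ss Ps e]]] := I_elim (hc _ (span_mem hi)).
apply: (I_intro Sy Sa (SM Ss Sgi) (P_nmul Ss Sgi Ps Pi)).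
by rewrite -e mulrAC mulrA.
Qed.

Lemma RI_sub y : iprod S Iset y -> Iset y.
Proof. apply: iprod_sub I_submod _ => a b Sa Ib; exact: smM I_submod Sa Ib. Qed.

Lemma RI_intro y : Iset y -> iprod S Iset y.
Proof. by move=> Iy; rewrite -[y]mul1r; apply: iprod_1 => //; exact: S1. Qed.

Lemma RI_submod : is_submod S (iprod S Iset).
Proof. exact: iprod_submod I_submod. Qed.

Lemma I2_submod : is_submod S (ipow S Iset 2).
Proof. exact: iprod_submod I_submod. Qed.

Lemma I2_sub C y : is_submod S C -> (forall u v, Iset u -> Iset v -> C (u * v)) ->
  ipow S Iset 2 y -> C y.
Proof. move=> hC hp; apply: iprod_sub hC _ => a b /RI_sub Ia Ib; exact: hp. Qed.

Lemma I2_intro u v : Iset u -> Iset v -> ipow S Iset 2 (u * v).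
Proof. by move=> Iu Iv; apply: iprod_1 => //; exact: RI_intro. Qed.

Lemma I2_I y : ipow S Iset 2 y -> Iset y.
Proof. apply: I2_sub I_submod _ => u v Iu Iv; exact: smM I_submod (I_S Iu) Iv. Qed.

Lemma I2_mulI z a : ipow S Iset 2 z -> Iset a -> ipow S Iset 2 (z * a).
Proof.
move=> hz Ia; pose C := fun z => ipow S Iset 2 (z * a).
have hC : is_submod S C.
  split.
  - by rewrite /C mul0r; exact: sm0 I2_submod.
  - by move=> y1 y2 h1 h2; rewrite /C mulrDl; apply: smD I2_submod h1 h2.
  - by move=> r y Sr hy; rewrite /C -mulrA; apply: smM I2_submod Sr hy.
apply: (I2_sub hC _ hz) => u v Iu Iv; rewrite /C -mulrA; apply: I2_intro => //.
exact: smMr I_submod (I_S Ia) Iv.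
Qed.

Definition Jset := isum (principal S x) (ipow S Iset 2).

Lemma J_ideal : is_ideal S Jset.
Proof.
split; first by apply: isum_submod; [exact: princ_submod | exact: I2_submod].
move=> y [a [b [[r [Sr ->]] Bb ->]]]; apply: SD; first exact: SM.
exact: I_S (I2_I Bb).
Qed.

Lemma J_I y : Jset y -> Iset y.
Proof.
move=> [a [b [[r [Sr ->]] Bb ->]]]; apply: smD I_submod _ (I2_I Bb).
exact: smMr I_submod Sr I_x.
Qed.

Lemma J_x : Jset x.
Proof.
exists x, 0; split; [by exists 1; split; [exact: S1 | rewrite mulr1] | exact: sm0 I2_submod | by rewrite addr0].
Qed.

Lemma J_I2 y : ipow S Iset 2 y -> Jset y.
Proof.
by move=> hy; exists 0, y; split => //; [exact: sm0 (princ_submod hxS) | rewrite add0r].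
Qed.

Definition Aset := iprod Jset (ipow S Iset 1).

Lemma A_submod : is_submod S Aset.
Proof. exact: iprod_submod RI_submod. Qed.

Lemma A_B y : Aset y -> ipow S Iset 2 y.
Proof.
apply: iprod_sub I2_submod _ => j a [c [z [[r [Sr ->]] Bz ->]]] /RI_sub Ia.
rewrite mulrDl; apply: smD I2_submod _ _; last exact: I2_mulI.
by apply: I2_intro => //; exact: smMr I_submod Sr I_x.
Qed.

Lemma KX M s : is_max_t_ideal S M -> (forall z, Iset z -> M z) -> S s -> ~ P s ->
  localize S M (x / s).
Proof.
move=> hM IM Ss Ps; case: (maxt_val (x / s) hPv hM) => // [[c [d [Sc Sd Md e]]]].
have s0 : s != 0 by apply/eqP => s0; apply: Ps; rewrite s0; exact: P_0.
have d0 : d != 0 by apply/eqP => d0; apply: (Md); rewrite d0; exact: maxt_0.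
exfalso; apply: (Md); apply: IM; apply: (I_intro Sd Sc Ss Ps).
have : (x / s)^-1 * d = c / d * d by rewrite e.
rewrite mulfVK // invf_div => <-; field; by rewrite hx0.
Qed.

Lemma LOC M u v : is_max_t_ideal S M -> (forall z, Iset z -> M z) -> Iset u -> Iset v ->
  localize S M (u * v / x).
Proof.
move=> hM IM Iu Iv.
have [a [s [Sa Ss Ps eu]]] := I_elim Iu.
have [b [t [Sb St Pt ev]]] := I_elim Iv.
have s0 : s != 0 by apply/eqP => s0; apply: Ps; rewrite s0; exact: P_0.
have t0 : t != 0 by apply/eqP => t0; apply: Pt; rewrite t0; exact: P_0.
have -> : u * v / x = x / (s * t) * (a * b).
  have -> : u = x * a / s by rewrite -eu; field.
  have -> : v = x * b / t by rewrite -ev; field.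
  by field; rewrite s0 t0 hx0.
apply: loc_mul (maxt_0 hM) (maxt_nmul hM) _ _.
  exact: KX (SM Ss St) (P_nmul Ss St Ps Pt).
by apply: loc_S; [case: hM | exact: SM].
Qed.

Lemma part2 : w_reduction S Jset Iset.
Proof.
split; first exact: J_ideal.
split; first exact: J_I.
exists 1%N => y; split.
  apply: wop_mono => z; exact: A_B.
apply: wop_sub_local A_submod _ => M hM.
pose L := fun b => exists w, [/\ S w, ~ M w & Aset (w * b)].
have hL : is_submod S L.
  have [[[_ M1] _] _ _] := hM.
  split.
  - exists 1; split; [exact: S1 | by case: hM => _ | rewrite mulr0; exact: sm0 A_submod].
  - move=> b1 b2 [w1 [Sw1 Mw1 A1]] [w2 [Sw2 Mw2 A2]]; exists (w1 * w2); split.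
    + exact: SM.
    + exact: maxt_nmul hM _ _ Sw1 Sw2 Mw1 Mw2.
    + have -> : w1 * w2 * (b1 + b2) = w2 * (w1 * b1) + w1 * (w2 * b2) by ring.
      by apply: smD A_submod _ _; apply: smM A_submod _ _.
  - move=> r b Sr [w [Sw Mw Ab]]; exists w; split => //.
    by rewrite mulrCA; apply: smM A_submod Sr Ab.
move=> bb Bb; apply: (I2_sub hL _ Bb) => u v Iu Iv.
case: (classic (exists z, Iset z /\ ~ M z)) => [[z [Iz Mz]]|nIM].
  exists z; split => //; first exact: I_S.
  rewrite mulrC; apply: iprod_1; first by apply: J_I2; apply: I2_intro.
  exact: RI_intro.
have IM : forall z, Iset z -> M z.
  by move=> z Iz; apply: NNPP => Mz; apply: nIM; exists z.
have [e [d [Se Sd Md ee]]] := LOC hM IM Iu Iv.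
have [a [s [Sa Ss Ps eu]]] := I_elim Iu.
have [b [t [Sb St Pt ev]]] := I_elim Iv.
have d0 : d != 0 by apply/eqP => d0; apply: Md; rewrite d0; exact: maxt_0.
have e1 : e = d * (u * v / x) by rewrite ee; field.
have Ie : Iset e.
  apply: (I_intro Se (SM (SM Sd Sa) Sb) (SM Ss St) (P_nmul Ss St Ps Pt)).
  rewrite e1.
  have -> : s * t * (d * (u * v / x)) = d * (s * u) * (t * v) / x by ring.
  rewrite eu ev; field; by rewrite hx0.
exists d; split => //.
have -> : d * (u * v) = x * e by rewrite e1; field; rewrite hx0.
apply: iprod_1; first exact: J_x.
exact: RI_intro.
Qed.

Lemma part3 : w_basic S Iset -> is_max_t_ideal S P.
Proof.
move=> hb; split; [exact: P_t | exact: P_1 |].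
move=> Q' tQ' Q'1 PQ' y; split; last exact: PQ'.
move=> Q'y; apply: NNPP => Py.
have Sy := tideal_sub tQ' Q'y.
have [M [hM Q'M]] := exists_maxt tQ' Q'1.
have IM : forall z, Iset z -> M z := fun z Iz => Q'M _ (PQ' _ (I_P Iz)).
have M0 := maxt_0 hM.
have [[[hsM _] _] M1 _] := hM.
have My := Q'M _ Q'y.
have [c [f [Sc Sf Mf e]]] := KX hM IM Sy Py.
have f0 : f != 0 by apply/eqP => f0; apply: (Mf); rewrite f0.
have y0 : y != 0 by apply/eqP => y0; apply: Py; rewrite y0; exact: P_0.
have Ic : Iset c.
  apply: (I_intro Sc Sf Sy Py).
  have -> : c = x / y * f by rewrite e; field.
  by field.
have Jc : wop S Jset c := (hb Jset part2 c).2 ((part1 c).2 Ic).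
have [g [hg [hv hcol]]] := Jc.
have [i [hi Mi]] := maxt_notall hM ((hv 1).2 S1).
have Sh : S g`_i by apply: hg.
have [a' [z [[r [Sr ear]] Bz ech]]] := hcol _ (span_mem hi).
have hsM' : is_submod S (localize S M) := loc_submod M0 M1 (maxt_nmul hM).
pose C := fun z => localize S M (z / x).
have hC : is_submod S C.
  split.
  - by rewrite /C mul0r; exact: sm0 hsM'.
  - by move=> y1 y2 h1 h2; rewrite /C mulrDl; apply: smD hsM' h1 h2.
  - by move=> r' y' Sr' h; rewrite /C -mulrA; apply: smM hsM' Sr' h.
have lz : C z := I2_sub hC (fun u v Iu Iv => LOC hM IM Iu Iv) Bz.
have lch : localize S M (f * g`_i / y).
  have -> : f * g`_i / y = r + z / x.
    have -> : r + z / x = (c * g`_i) / x by rewrite ech ear; field.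
    have -> : c = x / y * f by rewrite e; field.
    by field; rewrite hx0 y0.
  by apply: smD hsM' _ lz; apply: loc_S M1 Sr.
have [c' [d' [Sc' Sd' Md' e']]] := lch.
have d0 : d' != 0 by apply/eqP => d0; apply: (Md'); rewrite d0.
have : M (f * g`_i * d').
  have -> : f * g`_i * d' = y * c' by rewrite -[f * g`_i](mulfVK y0) e'; field.
  exact: smMr hsM Sc' My.
case/(maxt_prime hM (SM Sf Sh) Sd') => //.
by case/(maxt_prime hM Sf Sh).
Qed.

End Basics.

Unset Implicit Arguments.

Theorem lemma2p3 (K : fieldType) (S : K -> Prop)
    (HS : is_domain_with_qf S) (Hpvmd : PvMD S)
    (x : K) (hxS : S x) (hx0 : x != 0)
    (P : K -> Prop) (HP : minimal_prime_over S P x) :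
  let I : K -> Prop := fun y => S y /\ exists r, localize S P r /\ y = x * r in
  [/\ seteq (wop S I) I,
      w_reduction S (isum (principal S x) (ipow S I 2)) I &
      (w_basic S I -> is_max_t_ideal S P)].
Proof.
move=> I; split.
- exact: (part1 HS hxS hx0 HP).
- exact: (part2 HS Hpvmd hxS hx0 HP).
- exact: (part3 HS Hpvmd hxS hx0 HP).
Qed.
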